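(* Let $f(x)$ and $g(x)$ be two distinct regular formal power series in $\mathbb{C}[[x]]$ such that $[x^1]f=[x^1]g=1$. Then $\mathrm{ord}(f-g)=\mathrm{ord}(g^{\langle-1\rangle}-f^{\langle-1\rangle})$ and $m(f-g)=m(g^{\langle-1\rangle}-f^{\langle-1\rangle})$, where $f^{\langle-1\rangle}$ and $g^{\langle-1\rangle}$ denote the compositional inverses of $f$ and $g$.
   Context: For a formal power series $f(x)=\sum_{n\ge0}a_nx^n\in\mathbb{C}[[x]]$ and $n\in\mathbb{N}_0=\{0,1,2,\dots\}$, $[x^n]f$ denotes the coefficient $a_n$. A formal power series $f$ is called regular if $[x^0]f=0$ and $[x^1]f\neq0$; every regular $f$ has a unique regular compositional inverse $f^{\langle-1\rangle}$ satisfying $f(f^{\langle-1\rangle}(x))=f^{\langle-1\rangle}(f(x))=x$. For a nonzero formal power series $h$, $\mathrm{ord}(h)$ is the least $n\in\mathbb{N}_0$ with $[x^n]h\neq0$, and $m(h)=[x^{\mathrm{ord}(h)}]h\in\mathbb{C}\setminus\{0\}$. *)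

(* Defs.v *)
From HB Require Import structures.
From mathcomp Require Import all_boot all_order all_algebra.
From mathcomp Require Import complex.
From mathcomp Require Import boolp reals Rstruct.
Set Implicit Arguments. Unset Strict Implicit. Unset Printing Implicit Defensive.
Import Order.TTheory GRing.Theory Num.Theory.
Local Open Scope ring_scope.

Definition C : Type := complex Rdefinitions.R.

(* Formal power series over C, represented by their coefficient sequence:
   f n = [x^n] f. *)
Definition fps := nat -> C.

Definition fps_one : fps := fun n => (n == 0)%:R.
Definition fpsX : fps := fun n => (n == 1)%:R.
Definition fps_sub (f g : fps) : fps := fun n => f n - g n.
Definition fps_mul (f g : fps) : fps :=
  fun n => \sum_(i < n.+1) f i * g (n - i)%N.
Definition fps_exp (f : fps) (k : nat) : fps := iter k (fps_mul f) fps_one.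
(* Composition f(g(x)); meaningful when [x^0] g = 0. *)
Definition fps_comp (f g : fps) : fps :=
  fun n => \sum_(k < n.+1) f k * fps_exp g k n.

Definition regular (f : fps) : Prop := f 0%N = 0 /\ f 1%N != 0.

Definition comp_inverse (f h : fps) : Prop :=
  regular h /\ fps_comp f h = fpsX /\ fps_comp h f = fpsX.

Definition fps_ord (h : fps) : nat :=
  match pselect (exists n, h n != 0) with
  | left P => ex_minn P
  | right _ => 0%N
  end.

Definition fps_m (h : fps) : C := h (fps_ord h).

(* Main.v *)
Require Import Defs.
From HB Require Import structures.
From mathcomp Require Import all_boot all_order all_algebra.
From mathcomp Require Import complex.
From mathcomp Require Import boolp reals Rstruct.
From mathcomp Require Import zify.
Import GRing.Theory Num.Theory.
Local Open Scope ring_scope.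

Lemma exp_succ (q : fps) k : fps_exp q k.+1 = fps_mul q (fps_exp q k).
Proof. by []. Qed.

Lemma expA (q : fps) : q 0%N = 0 -> forall k m, (m < k)%N -> fps_exp q k m = 0.
Proof.
move=> q0; elim=> [|k IH] m // hm.
rewrite exp_succ /fps_mul big_ord_recl q0 mul0r add0r big1 // => i _.
rewrite IH ?mulr0 // lift0; have := ltn_ord i; lia.
Qed.

Lemma expD (q : fps) : q 0%N = 0 -> forall k, fps_exp q k k = q 1%N ^+ k.
Proof.
move=> q0; elim=> [|k IH]; first by rewrite /fps_exp /= /fps_one eqxx expr0.
rewrite exp_succ /fps_mul big_ord_recl q0 mul0r add0r big_ord_recl /= subn1 /= IH.
rewrite big1 ?addr0 ?exprS // => i _.
rewrite expA ?mulr0 // ?lift0; have := ltn_ord i; rewrite /bump /= ?leq0n ?add1n; lia.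
Qed.

Lemma exp1 (q : fps) m : fps_exp q 1 m = q m.
Proof.
rewrite exp_succ /fps_mul big_ord_recr /= subnn /fps_exp /= /fps_one eqxx (_ : true%:R = 1) // mulr1.
rewrite big1 ?add0r // => i _ /=.
have := ltn_ord i => hi.
have -> : (m - i == 0)%N = false by apply/negbTE; lia.
by rewrite mulr0.
Qed.

Lemma expC (q r : fps) m : (forall j, (j < m)%N -> q j = r j) ->
  forall k j, (j < m)%N -> fps_exp q k j = fps_exp r k j.
Proof.
move=> H; elim=> [|k IH] j hj //.
rewrite !exp_succ /fps_mul; apply: eq_bigr => i _.
have := ltn_ord i => hi.
rewrite H ?IH //; lia.
Qed.

Lemma expB (q r : fps) m : q 0%N = 0 -> r 0%N = 0 ->
  (forall j, (j < m)%N -> q j = r j) ->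
  forall k, (1 < k)%N -> fps_exp q k m = fps_exp r k m.
Proof.
move=> q0 r0 H [|[|k]] // _.
rewrite (exp_succ q) (exp_succ r) /fps_mul !big_ord_recr; rewrite [nat_of_ord ord_max]/= subnn !expA // !mulr0 ?addr0; congr (_ + _).
apply: eq_bigr => i _ /=.
have := ltn_ord i => hi.
case: (posnP i) => [->|ip]; first by rewrite q0 r0 !mul0r.
rewrite H // -!exp_succ (@expC q r m H) //; lia.
Qed.

Lemma compD (f q r : fps) m : q 0%N = 0 -> r 0%N = 0 ->
  (forall j, (j < m)%N -> q j = r j) -> (0 < m)%N ->
  fps_comp f q m - fps_comp f r m = f 1%N * (q m - r m).
Proof.
move=> q0 r0 H; case: m H => [|m] H // _.
rewrite /fps_comp -sumrB big_ord_recl subrr add0r big_ord_recl !lift0 !exp1 mulrBr.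
rewrite big1 ?addr0 // => i _.
by rewrite (@expB q r m.+1 q0 r0 H) ?subrr // !lift0.
Qed.

Lemma compE (f g b : fps) n : (forall k, (k < n)%N -> f k = g k) ->
  forall m, (m < n)%N -> fps_comp f b m = fps_comp g b m.
Proof.
move=> H m hm; apply: eq_bigr => i _.
have := ltn_ord i => hi.
rewrite H //; lia.
Qed.

Lemma compN (f g b : fps) n : b 0%N = 0 -> (forall k, (k < n)%N -> f k = g k) ->
  fps_comp f b n - fps_comp g b n = (f n - g n) * b 1%N ^+ n.
Proof.
move=> b0 H; rewrite /fps_comp -sumrB big_ord_recr /= expD // -mulrBl.
rewrite big1 ?add0r // => i _ /=.
by rewrite H ?subrr.
Qed.

Lemma ord_char (h : fps) n : (forall k, (k < n)%N -> h k = 0) -> h n != 0 ->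
  fps_ord h = n.
Proof.
move=> H hn; rewrite /fps_ord; case: pselect => [P|nP]; last by exfalso; apply: nP; exists n.
case: ex_minnP => m hm minm.
apply/eqP; rewrite eqn_leq minm //= leqNgt; apply/negP => lt.
by move: hm; rewrite H ?eqxx.
Qed.

Theorem theorem2 (f g finv ginv : fps) :
  regular f -> regular g -> f <> g ->
  f 1%N = 1 -> g 1%N = 1 ->
  comp_inverse f finv -> comp_inverse g ginv ->
  fps_ord (fps_sub f g) = fps_ord (fps_sub ginv finv) /\
  fps_m (fps_sub f g) = fps_m (fps_sub ginv finv).
Proof.
move=> [f0 _] [g0 _] fg f1 g1 [[a0 _] [fa _]] [[b0 _] [gb _]].
set a := finv in a0 fa *; set b := ginv in b0 gb *.
have ex : exists n, fps_sub f g n != 0.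
  apply/not_existsP => H; apply: fg; apply/funext => n.
  by apply/eqP; rewrite -subr_eq0; have := H n; case: eqP.
case: (ex_minnP ex) => n hn minn.
have agree : forall k, (k < n)%N -> f k = g k.
  move=> k kn; apply/eqP; rewrite -subr_eq0; apply/negPn/negP => hk.
  by have := minn _ hk; rewrite leqNgt kn.
have n2 : (1 < n)%N.
  case: n hn {minn agree} => [|[|n]] //; rewrite /fps_sub ?f0 ?g0 ?f1 ?g1 subrr eqxx //.
set c := fps_sub f g n.
have b1 : b 1%N = 1.
  have := congr1 (fun h => h 1%N) gb.
  rewrite /fps_comp /fpsX /= !big_ord_recl big_ord0 g0 mul0r add0r addr0.
  by rewrite lift0 expD // expr1 g1 mul1r.
have fbn : fps_comp f b n = c.
  have := (@compN f g b n b0 agree); rewrite gb b1 expr1n mulr1 /fpsX.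
  have -> : (n == 1%N) = false by apply/negbTE; lia.
  by move/eqP; rewrite subr0 => /eqP.
have fbm : forall m, (m < n)%N -> fps_comp f b m = fpsX m.
  by move=> m mn; rewrite (@compE f g b n agree m mn) gb.
have ab : forall m, (m <= n)%N -> forall j, (j < m)%N -> a j = b j.
  elim=> [|m IH] // mn j jm.
  have IH' := IH (ltnW mn).
  have [jl|] := ltnP j m; first exact: IH'.
  move=> mj; have -> : j = m by lia.
  case: (posnP m) => [->|mp]; first by rewrite a0 b0.
  have := (@compD f a b m a0 b0 IH' mp); rewrite fa fbm // subrr f1 mul1r.
  by move/eqP; rewrite eq_sym subr_eq0 => /eqP.
have abn : fps_sub b a n = c.
  have := (@compD f a b n a0 b0 (ab n (leqnn n)) (ltnW n2)).
  rewrite fa fbn f1 mul1r /fpsX.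
  have -> : (n == 1%N) = false by apply/negbTE; lia.
  rewrite /fps_sub -[b n - a n]opprB => <-; by rewrite sub0r opprK.
have ordh : fps_ord (fps_sub f g) = n.
  apply: ord_char => // k kn; by rewrite /fps_sub agree ?subrr.
have ordab : fps_ord (fps_sub b a) = n.
  apply: ord_char; last by rewrite abn.
  move=> k kn; by rewrite /fps_sub (ab n (leqnn n)) ?subrr.
by rewrite /fps_m ordh ordab abn.
Qed.
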